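(* Let $P$ be a finite set of points in the plane and let $f$ be a stacking order of $\mathcal{D}(P)$. Then $$\mathrm{vis}(\mathcal{D}(P),f)\ \ge\ \lim_{\varepsilon\to 0}\mathrm{vis}(\mathcal{D}(\varepsilon P),f),$$ where on the right-hand side $f$ denotes the corresponding stacking order of $\mathcal{D}(\varepsilon P)$.
   Context: For a point $p$ in the plane, $D(p)$ denotes the closed disk of radius $1$ centered at $p$, and for a finite point set $P$, $\mathcal{D}(P)=\{D(p): p\in P\}$. A stacking order of a finite collection $\mathcal{D}$ of $n$ distinct unit disks in the plane is a bijection $f:\mathcal{D}\to\{1,\dots,n\}$; $f(D)$ is regarded as the height ($z$-coordinate) of $D$, and the arrangement is viewed from below. A point $x$ on the boundary circle of $D\in\mathcal{D}$ is visible if $x$ does not lie in any disk $D'\in\mathcal{D}$ with $f(D')<f(D)$. The visible perimeter $\mathrm{vis}(\mathcal{D},f)$ is the total length of all visible boundary points, summed over all disks of $\mathcal{D}$. For $\varepsilon>0$ and a point $p=(x,y)$, $\varepsilon p=(\varepsilon x,\varepsilon y)$, and $\varepsilon P=\{\varepsilon p: p\in P\}$. A stacking order $f$ of $\mathcal{D}(P)$ is identified with the stacking order of $\mathcal{D}(\varepsilon P)$ given by $D(\varepsilon p)\mapsto f(D(p))$. *)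

(* Defs.v *)
From HB Require Import structures.
From mathcomp Require Import all_boot all_order all_algebra.
From mathcomp Require Import all_classical all_reals all_analysis.
Set Implicit Arguments. Unset Strict Implicit. Unset Printing Implicit Defensive.
Import Order.TTheory GRing.Theory Num.Theory.
Import numFieldNormedType.Exports.
Local Open Scope classical_set_scope.
Local Open Scope ring_scope.

Definition in_unit_disk (R : realType) (c x : R * R) : Prop :=
  (x.1 - c.1) ^+ 2 + (x.2 - c.2) ^+ 2 <= 1.

Definition bdry_pt (R : realType) (c : R * R) (t : R) : R * R :=
  (c.1 + cos t, c.2 + sin t).

Definition vis_arc (R : realType) (n : nat) (P : 'I_n -> R * R)
  (f : 'I_n -> nat) (i : 'I_n) : set R :=
  [set t | 0 <= t < 2 * pi /\
     forall j : 'I_n, (f j < f i)%N -> ~ in_unit_disk (P j) (bdry_pt (P i) t)].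

(* visible perimeter: sum over disks of the length (Lebesgue measure of the
   arc-length parameter set) of the visible boundary *)
Definition vis (R : realType) (n : nat) (P : 'I_n -> R * R)
  (f : 'I_n -> nat) : R :=
  \sum_(i < n) fine (@lebesgue_measure R (vis_arc P f i)).

Definition scale_pts (R : realType) (n : nat) (eps : R) (P : 'I_n -> R * R)
  : 'I_n -> R * R := fun i => (eps * (P i).1, eps * (P i).2).

(* Main.v *)
Require Import Defs.
From HB Require Import structures.
From mathcomp Require Import all_boot all_order all_algebra.
From mathcomp Require Import all_classical all_reals all_analysis.
From mathcomp Require Import ring lra.
Import Order.TTheory GRing.Theory Num.Theory.
Import numFieldNormedType.Exports.
Local Open Scope classical_set_scope.
Local Open Scope ring_scope.

Lemma leb_mono (R : realType) (A B : set R) :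
  A `<=` B -> (lebesgue_measure A <= lebesgue_measure B)%E.
Proof.
move=> AB; rewrite /lebesgue_measure /lebesgue_stieltjes_measure /measure_extension.
exact: le_outer_measure.
Qed.

Lemma arc_fin (R : realType) n (P : 'I_n -> R * R) f i :
  (@lebesgue_measure R (vis_arc P f i)) \is a fin_num.
Proof.
rewrite ge0_fin_numE ?measure_ge0//.
apply: (le_lt_trans (@leb_mono _ _ [set` `[0, 2 * pi[%R] _)).
  by move=> t [/andP[t0 t2] _] /=; rewrite in_itv /= t0 t2.
rewrite lebesgue_measure_itv /=.
by case: ifP => _; rewrite ?ltry.
Qed.

Lemma alg_mono (R : realType) (e1 e2 s q : R) :
  0 < e1 -> e1 <= e2 -> 0 <= s -> 0 < e1 ^+ 2 * s + 2 * e1 * q ->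
  0 < e2 ^+ 2 * s + 2 * e2 * q.
Proof.
move=> e10 e12 s0 h.
have h1 : 0 < e1 * s + 2 * q.
  have : 0 < e1 * (e1 * s + 2 * q).
    by apply: (lt_le_trans h); rewrite le_eqVlt; apply/orP; left; apply/eqP; ring.
  by rewrite pmulr_rgt0.
have h2 : 0 < e2 * s + 2 * q.
  apply: (lt_le_trans h1); rewrite lerD2r; exact: ler_wpM2r.
have : 0 < e2 * (e2 * s + 2 * q) by rewrite mulr_gt0// (lt_le_trans e10).
move/lt_le_trans; apply; rewrite le_eqVlt; apply/orP; left; apply/eqP; ring.
Qed.

Lemma disk_eq (R : realType) (e : R) (a b : R * R) (t : R) :
  ((bdry_pt (e * a.1, e * a.2) t).1 - (e * b.1, e * b.2).1) ^+ 2 +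
  ((bdry_pt (e * a.1, e * a.2) t).2 - (e * b.1, e * b.2).2) ^+ 2 =
  e ^+ 2 * ((a.1 - b.1) ^+ 2 + (a.2 - b.2) ^+ 2) +
  2 * e * ((a.1 - b.1) * cos t + (a.2 - b.2) * sin t) + 1.
Proof.
rewrite /bdry_pt /=.
rewrite -[X in _ = _ + X](cos2Dsin2 t).
ring.
Qed.

Lemma arc_mono (R : realType) n (P : 'I_n -> R * R) f i (e1 e2 : R) :
  0 < e1 -> e1 <= e2 ->
  vis_arc (scale_pts e1 P) f i `<=` vis_arc (scale_pts e2 P) f i.
Proof.
move=> e10 e12 t [ht H]; split => // j /H; rewrite /in_unit_disk /scale_pts.
rewrite !disk_eq => /negP; rewrite -ltNge => h; apply/negP; rewrite -ltNge.
move: h; rewrite -[X in X < _ -> _]add0r -[X in _ -> X < _]add0r !ltrD2r => h.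
apply: (@alg_mono _ e1 e2 _ _ e10 e12 _ h).
by rewrite addr_ge0 // sqr_ge0.
Qed.

Lemma vis_mono (R : realType) n (P : 'I_n -> R * R) f (e1 e2 : R) :
  0 < e1 -> e1 <= e2 -> vis (scale_pts e1 P) f <= vis (scale_pts e2 P) f.
Proof.
move=> e10 e12; apply: ler_sum => i _.
by apply: fine_le; rewrite ?arc_fin//; apply: leb_mono; exact: arc_mono.
Qed.

Lemma vis_ge0 (R : realType) n (P : 'I_n -> R * R) f : 0 <= vis P f.
Proof. by apply: sumr_ge0 => i _; apply: fine_ge0; exact: measure_ge0. Qed.

Theorem lemma1 (R : realType) (n : nat) (P : 'I_n -> R * R)
  (f : 'I_n -> nat) (hP : injective P) (hf : injective f)
  (hrange : forall i, (1 <= f i <= n)%N) :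
  cvg ((fun eps : R => vis (scale_pts eps P) f) @ 0^'+) /\
  lim ((fun eps : R => vis (scale_pts eps P) f) @ 0^'+) <= vis P f.
Proof.
have C : cvg ((fun eps : R => vis (scale_pts eps P) f) @ 0^'+).
  apply: nondecreasing_at_right_is_cvgr.
    near=> x; move=> a b; rewrite !in_itv /= => /andP[a0 _] _ ab.
    exact: vis_mono.
  near=> x; exists 0 => _ [y _ <-]; exact: vis_ge0.
split => //; apply: limr_le => //.
have -> : vis P f = vis (scale_pts 1 P) f.
  by congr vis; apply: funext => i; rewrite /scale_pts !mul1r -surjective_pairing.
near=> e; apply: vis_mono.
  by near: e; exact: nbhs_right_gt.
apply/ltW; near: e; exact: nbhs_right_lt.
Unshelve. all: by end_near.
Qed.
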